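(* Let $M$ be an adequate monoid and $\chi:\Sigma\to M$ a function, and let $\rho:UT^1(\Sigma)\to M$ be the map defined below. Then $\rho$ is a morphism of $(2,1,1,0)$-algebras from $UT^1(\Sigma)$ (with unpruned multiplication $\times$, unpruned $(+)$, unpruned $( * )$ and the trivial tree as identity) to $M$; that is, $\rho(X\times Y)=\rho(X)\rho(Y)$, $\rho(X^{(+)})=\rho(X)^+$, $\rho(X^{( * )})=\rho(X)^*$ for all $X,Y$, and $\rho$ maps the trivial tree to $1$.
   Context: Adequate monoid: a monoid $M$ whose idempotents commute and in which every $\mathcal{L}^*$-class and every $\mathcal{R}^*$-class contains an idempotent, where $a\,\mathcal{L}^*\,b$ iff ($ax=ay\Leftrightarrow bx=by$ for all $x,y\in M$) and $a\,\mathcal{R}^*\,b$ iff ($xa=ya\Leftrightarrow xb=yb$ for all $x,y\in M$); $x^+$ and $x^*$ denote the unique idempotents $\mathcal{R}^*$- and $\mathcal{L}^*$-related to $x$. It is regarded as a $(2,1,1,0)$-algebra. Trees: a $\Sigma$-tree is a finite directed graph whose underlying undirected graph is a tree, each edge $e$ having initial vertex $\alpha(e)$, terminal vertex $\omega(e)$ and label $\lambda(e)\in\Sigma$, with distinguished start and end vertices such that there is a (possibly empty) directed path (the trunk) from start to end vertex. Trivial tree: one vertex; idempotent tree: start vertex equals end vertex. $UT^1(\Sigma)$ is the set of isomorphism types (label-, start- and end-preserving graph isomorphisms) of $\Sigma$-trees. Unpruned operations: $X\times Y$ identifies the end vertex of (a copy of) $X$ with the start vertex of (a disjoint copy of) $Y$,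 start vertex that of $X$, end vertex that of $Y$; $X^{(+)}$ is $X$ with end vertex moved to the start vertex; $X^{( * )}$ is $X$ with start vertex moved to the end vertex. The map $\tau$ from idempotent trees to idempotents of $M$ is defined recursively on the number of edges: if $X$ has no edges, $\tau(X)=1$. Otherwise let $v$ be its start (= end) vertex; for an edge $e$ with $\alpha(e)=v$ let $X_e$ be the connected component of $X$ with edge $e$ removed containing $\omega(e)$, viewed as an idempotent tree with start and end vertex $\omega(e)$; for an edge $e$ with $\omega(e)=v$ let $X_e$ be the component of $X$ with $e$ removed containing $\alpha(e)$, viewed as an idempotent tree at $\alpha(e)$. Then $\tau(X)=\prod_{e:\alpha(e)=v}[\chi(\lambda(e))\tau(X_e)]^+\cdot\prod_{e:\omega(e)=v}[\tau(X_e)\chi(\lambda(e))]^*$ (a product of commuting idempotents, independent of order). For an arbitrary tree $X$ with trunk vertices $v_0,\dots,v_n$ in order and $a_i$ the label of the trunk edge from $v_{i-1}$ to $v_i$, let $X_i$ be the connected component containing $v_i$ of $X$ with all trunk edges removed, viewed as an idempotent tree at $v_i$, and set $\rho(X)=\tau(X_0)\chi(a_1)\tau(X_1)\chi(a_2)\cdots\chi(a_n)\tau(X_n)$. *)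

(* Defs.v *)
From mathcomp Require Import all_boot.
From Stdlib Require Import ClassicalEpsilon.

Set Implicit Arguments.
Unset Strict Implicit.
Unset Printing Implicit Defensive.

Definition Lstar (T : Type) (mul : T -> T -> T) (a b : T) : Prop :=
  forall x y, mul a x = mul a y <-> mul b x = mul b y.

Definition Rstar (T : Type) (mul : T -> T -> T) (a b : T) : Prop :=
  forall x y, mul x a = mul y a <-> mul x b = mul y b.

Definition idempotent_el (T : Type) (mul : T -> T -> T) (e : T) : Prop :=
  mul e e = e.

Record adequate_monoid := AdequateMonoid {
  acar :> Type;
  amul : acar -> acar -> acar;
  aone : acar;
  amulA : forall a b c, amul a (amul b c) = amul (amul a b) c;
  amul1 : forall a, amul aone a = a;
  amulr1 : forall a, amul a aone = a;
  aidem_comm : forall e f, idempotent_el amul e -> idempotent_el amul f ->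
                 amul e f = amul f e;
  aR_idem : forall a, exists e, idempotent_el amul e /\ Rstar amul e a;
  aL_idem : forall a, exists e, idempotent_el amul e /\ Lstar amul e a
}.

(* x^+ : the (unique) idempotent R*-related to x *)
Definition aplus (M : adequate_monoid) (x : M) : M :=
  proj1_sig (constructive_indefinite_description _ (aR_idem x)).

(* x^* : the (unique) idempotent L*-related to x *)
Definition astar (M : adequate_monoid) (x : M) : M :=
  proj1_sig (constructive_indefinite_description _ (aL_idem x)).

Record tree (Sigma : Type) := Tree {
  tV : finType;
  tE : finType;
  talpha : tE -> tV;
  tomega : tE -> tV;
  tlab : tE -> Sigma;
  tstart : tV;
  tend : tV
}.

Section Trees.
Local Unset Implicit Arguments.
Variable Sigma : Type.
Implicit Types X Y : tree Sigma.

Definition uadj X : rel (tV X) :=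
  fun u w => [exists e, ((talpha e == u) && (tomega e == w))
                        || ((talpha e == w) && (tomega e == u))].

Definition dadj X : rel (tV X) :=
  fun u w => [exists e, (talpha e == u) && (tomega e == w)].

Fixpoint dwalk X (v : tV X) (es : seq (tE X)) (w : tV X) : bool :=
  match es with
  | [::] => v == w
  | e :: es' => (talpha e == v) && dwalk X (tomega e) es' w
  end.

(* X is a Sigma-tree: the underlying undirected graph is a tree (connected,
   with one edge fewer than vertices), and there is a directed path from
   the start vertex to the end vertex. *)
Definition is_tree X : Prop :=
  [/\ forall u w : tV X, connect (uadj X) u w,
      #|tE X|.+1 = #|tV X| &
      exists es, dwalk X (tstart X) es (tend X)].

(* the trunk: the (unique, in a tree) directed path from start to end *)
Definition trunk X : seq (tE X) :=
  epsilon (inhabits [::]) (fun es => dwalk X (tstart X) es (tend X)).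

(* X x Y : glue the end vertex of X to the start vertex of Y *)
Definition tmulV X Y : finType :=
  (tV X + {v : tV Y | v != tstart Y})%type.

Definition embY X Y (v : tV Y) : tmulV X Y :=
  match insub v with
  | Some u => inr u
  | None => inl (tend X)
  end.

Definition tmul X Y : tree Sigma :=
  @Tree Sigma (tmulV X Y) (tE X + tE Y)%type
    (fun e => match e with inl e => inl (talpha e) | inr e => embY X Y (talpha e) end)
    (fun e => match e with inl e => inl (tomega e) | inr e => embY X Y (tomega e) end)
    (fun e => match e with inl e => tlab e | inr e => tlab e end)
    (inl (tstart X))
    (embY X Y (tend Y)).

Definition tplus X : tree Sigma :=
  @Tree Sigma (tV X) (tE X) (@talpha _ X) (@tomega _ X) (@tlab _ X)
    (tstart X) (tstart X).

Definition tstar X : tree Sigma :=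
  @Tree Sigma (tV X) (tE X) (@talpha _ X) (@tomega _ X) (@tlab _ X)
    (tend X) (tend X).

Definition ttriv : tree Sigma :=
  @Tree Sigma unit void (fun e => match e with end) (fun e => match e with end)
    (fun e => match e with end) tt tt.

Variable M : adequate_monoid.
Variable chi : Sigma -> M.

(* tau_at X n v excl = tau of the idempotent tree rooted at v consisting of
   the connected component of v in X with the edges of excl removed
   (recursion on the number of edges; n is a bound on it).  For an edge e
   at v, the component X_e of (that tree minus e) containing the other end
   of e is the component of X minus e, i.e. it is obtained by excluding
   just e at its root. *)
Fixpoint tau_at X (n : nat) (v : tV X) (excl : pred (tE X)) : M :=
  match n with
  | 0 => aone M
  | n'.+1 =>
    amul
      (\big[@amul M/aone M]_(e : tE X | ~~ excl e && (talpha e == v))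
          aplus (amul (chi (tlab e)) (tau_at X n' (tomega e) (pred1 e))))
      (\big[@amul M/aone M]_(e : tE X | ~~ excl e && (tomega e == v))
          astar (amul (tau_at X n' (talpha e) (pred1 e)) (chi (tlab e))))
  end.

(* tau of the idempotent tree X_i hanging at the trunk vertex v *)
Definition tau_trunk X (v : tV X) : M :=
  tau_at X #|tE X| v (fun f => f \in trunk X).

(* tau(X_0) chi(a_1) tau(X_1) ... chi(a_n) tau(X_n) along the trunk *)
Fixpoint rho_aux X (v : tV X) (es : seq (tE X)) : M :=
  match es with
  | [::] => tau_trunk X v
  | e :: es' => amul (tau_trunk X v) (amul (chi (tlab e)) (rho_aux X (tomega e) es'))
  end.

Definition rho X : M := rho_aux X (tstart X) (trunk X).

End Trees.

Arguments rho {Sigma M} chi X.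
Arguments tmul {Sigma} X Y.
Arguments tplus {Sigma} X.
Arguments tstar {Sigma} X.
Arguments is_tree {Sigma} X.

(* Main.v *)
Require Import Defs.
From mathcomp Require Import all_boot.
From HB Require Import structures.
From mathcomp Require Import zify.
From Stdlib Require Import ProofIrrelevance ClassicalEpsilon.
Set Implicit Arguments.
Unset Strict Implicit.
Unset Printing Implicit Defensive.

Section Alg.
Variable M : adequate_monoid.
Local Notation "a * b" := (amul a b).
Local Notation "1" := (aone M).

Definition idem (e : M) := e * e = e.

Lemma aplus_spec (x : M) : idem (aplus x) /\ Rstar (@amul M) (aplus x) x.
Proof. rewrite /aplus; case: constructive_indefinite_description => e [h1 h2] /=; by split. Qed.
Lemma astar_spec (x : M) : idem (astar x) /\ Lstar (@amul M) (astar x) x.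
Proof. rewrite /astar; case: constructive_indefinite_description => e [h1 h2] /=; by split. Qed.

Lemma idem_comm e f : idem e -> idem f -> e * f = f * e.
Proof. exact: aidem_comm. Qed.

Lemma idemM e f : idem e -> idem f -> idem (e * f).
Proof.
move=> he hf; rewrite /idem -amulA (amulA f e f) -(idem_comm he hf).
by rewrite -amulA hf amulA he.
Qed.
Lemma idem1 : idem 1. Proof. exact: amul1. Qed.

Lemma Rstar_uniq e f : idem e -> idem f -> Rstar (@amul M) e f -> e = f.
Proof.
move=> he hf H.
have h1 : e * f = f by have := proj1 (H e 1); rewrite !amul1; apply.
have h2 : f * e = e by have := proj2 (H f 1); rewrite !amul1; apply.
by rewrite -h2 -(idem_comm he hf) h1.
Qed.
Lemma Lstar_uniq e f : idem e -> idem f -> Lstar (@amul M) e f -> e = f.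
Proof.
move=> he hf H.
have h1 : f * e = f by have := proj1 (H e 1); rewrite !amulr1; apply.
have h2 : e * f = e by have := proj2 (H f 1); rewrite !amulr1; apply.
by rewrite -h2 (idem_comm he hf) h1.
Qed.

Lemma Rstar_trans a b c : Rstar (@amul M) a b -> Rstar (@amul M) b c -> Rstar (@amul M) a c.
Proof. move=> h1 h2 x y; rewrite h1; exact: h2. Qed.
Lemma Rstar_sym a b : Rstar (@amul M) a b -> Rstar (@amul M) b a.
Proof. move=> h x y; by rewrite h. Qed.
Lemma Lstar_trans a b c : Lstar (@amul M) a b -> Lstar (@amul M) b c -> Lstar (@amul M) a c.
Proof. move=> h1 h2 x y; rewrite h1; exact: h2. Qed.
Lemma Lstar_sym a b : Lstar (@amul M) a b -> Lstar (@amul M) b a.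
Proof. move=> h x y; by rewrite h. Qed.

Lemma Rstar_lmul c a b : Rstar (@amul M) a b -> Rstar (@amul M) (c * a) (c * b).
Proof. move=> h x y; rewrite !amulA; exact: h. Qed.
Lemma Lstar_rmul c a b : Lstar (@amul M) a b -> Lstar (@amul M) (a * c) (b * c).
Proof. move=> h x y; rewrite -!amulA; exact: h. Qed.

Lemma aplus_idem e : idem e -> aplus e = e.
Proof.
move=> he; case: (aplus_spec e) => h1 h2; apply: Rstar_uniq => //.
Qed.
Lemma astar_idem e : idem e -> astar e = e.
Proof.
move=> he; case: (astar_spec e) => h1 h2; apply: Lstar_uniq => //.
Qed.

Lemma aplus_mul_plus (x y : M) : aplus (x * y) = aplus (x * aplus y).
Proof.
case: (aplus_spec (x * y)) => h1 h2; case: (aplus_spec (x * aplus y)) => h3 h4.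
apply: Rstar_uniq => //; apply: (Rstar_trans h2); apply: (Rstar_trans _ (Rstar_sym h4)).
apply: Rstar_lmul; apply: Rstar_sym; exact: (aplus_spec y).2.
Qed.
Lemma aplus_idem_mul (e x : M) : idem e -> aplus (e * x) = e * aplus x.
Proof.
move=> he; case: (aplus_spec (e * x)) => h1 h2; case: (aplus_spec x) => h3 h4.
apply: Rstar_uniq => //; first exact: idemM.
apply: (Rstar_trans h2); apply: Rstar_lmul; exact: Rstar_sym.
Qed.
Lemma astar_mul_star (x y : M) : astar (x * y) = astar (astar x * y).
Proof.
case: (astar_spec (x * y)) => h1 h2; case: (astar_spec (astar x * y)) => h3 h4.
apply: Lstar_uniq => //; apply: (Lstar_trans h2); apply: (Lstar_trans _ (Lstar_sym h4)).
apply: Lstar_rmul; apply: Lstar_sym; exact: (astar_spec x).2.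
Qed.
Lemma astar_mul_idem (x e : M) : idem e -> astar (x * e) = astar x * e.
Proof.
move=> he; case: (astar_spec (x * e)) => h1 h2; case: (astar_spec x) => h3 h4.
apply: Lstar_uniq => //; first exact: idemM.
apply: (Lstar_trans h2); apply: Lstar_rmul; exact: Lstar_sym.
Qed.

Record idemT := IdemT { ival : M; ivalP : idem ival }.

Lemma idemT_eq (a b : idemT) : ival a = ival b -> a = b.
Proof.
case: a b => a ha [b hb] /= e; subst b; congr IdemT; exact: proof_irrelevance.
Qed.

Definition imul (a b : idemT) : idemT := IdemT (idemM (ivalP a) (ivalP b)).
Definition ione : idemT := IdemT idem1.

Lemma imulA : associative imul.
Proof. move=> a b c; apply: idemT_eq => /=; exact: amulA. Qed.
Lemma imulC : commutative imul.
Proof. move=> a b; apply: idemT_eq => /=; apply: idem_comm; exact: ivalP. Qed.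
Lemma imul1m : left_id ione imul.
Proof. move=> a; apply: idemT_eq => /=; exact: amul1. Qed.
Lemma imulm1 : right_id ione imul.
Proof. move=> a; apply: idemT_eq => /=; exact: amulr1. Qed.

HB.instance Definition _ := Monoid.isComLaw.Build idemT ione imul imulA imulC imul1m.

Definition aplusI (x : M) : idemT := IdemT (aplus_spec x).1.
Definition astarI (x : M) : idemT := IdemT (astar_spec x).1.

Lemma big_ival (I : Type) (r : seq I) (P : pred I) (F : I -> idemT) :
  ival (\big[imul/ione]_(i <- r | P i) F i) = \big[@amul M/1]_(i <- r | P i) ival (F i).
Proof. by apply: (big_morph ival) => //. Qed.

End Alg.

Section Graph.
Variable Sigma : Type.
Variable X : tree Sigma.
Local Notation V := (tV X).
Local Notation E := (tE X).

Definition ends (c : E * bool) : V * V :=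
  if c.2 then (talpha c.1, tomega c.1) else (tomega c.1, talpha c.1).

Fixpoint uwalk (v : V) (s : seq (E * bool)) (w : V) : bool :=
  match s with
  | [::] => v == w
  | c :: s' => ((ends c).1 == v) && uwalk (ends c).2 s' w
  end.

Fixpoint nb (s : seq (E * bool)) : bool :=
  if s is c :: s' then (if s' is d :: _ then c.1 != d.1 else true) && nb s' else true.

Definition flip (c : E * bool) := (c.1, ~~ c.2).
Definition revw s := rev (map flip s).
Definition wend v s := last v (map (fun c => (ends c).2) s).
Definition headok (excl : pred E) (s : seq (E * bool)) :=
  if s is c :: _ then ~~ excl c.1 else true.

Lemma ends_flip c : ends (flip c) = ((ends c).2, (ends c).1).
Proof. by case: c => e [] . Qed.

Lemma uwalk_cat v s1 s2 w :
  uwalk v (s1 ++ s2) w = uwalk v s1 (wend v s1) && uwalk (wend v s1) s2 w.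
Proof.
elim: s1 v => [|c s1 IH] v /=; first by rewrite eqxx.
by rewrite IH /wend /= andbA.
Qed.

Lemma uwalk_end v s w : uwalk v s w -> w = wend v s.
Proof.
elim: s v => [|c s IH] v /=; first by move/eqP.
by case/andP=> _ /IH.
Qed.

Lemma uwalk_catI v s1 m s2 w : uwalk v s1 m -> uwalk m s2 w -> uwalk v (s1 ++ s2) w.
Proof. move=> h1 h2; rewrite uwalk_cat -(uwalk_end h1) h1; exact: h2. Qed.

Lemma uwalk_catE v s1 s2 w : uwalk v (s1 ++ s2) w ->
  exists m, uwalk v s1 m /\ uwalk m s2 w.
Proof. rewrite uwalk_cat => /andP [h1 h2]; by exists (wend v s1). Qed.

Lemma uwalk_rev v s w : uwalk v s w -> uwalk w (revw s) v.
Proof.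
elim: s v => [|c s IH] v /=; first by move/eqP ->; rewrite /revw /= eqxx.
case/andP => /eqP h1 /IH h2; rewrite /revw /= rev_cons -cats1.
apply: (uwalk_catI h2) => /=; by rewrite ends_flip /= h1 !eqxx.
Qed.

Lemma nb_cons c s : nb (c :: s) -> nb s.
Proof. by case/andP. Qed.

Lemma nb_catl s1 s2 : nb (s1 ++ s2) -> nb s1.
Proof.
elim: s1 => [|c s1 IH] //= /andP [h1 h2]; rewrite (IH h2) andbT.
by case: s1 h1 {IH h2}.
Qed.

Lemma nb_catr s1 s2 : nb (s1 ++ s2) -> nb s2.
Proof. elim: s1 => [|c s1 IH] //= /andP [_ h]; exact: IH. Qed.

Lemma nb_rcons s c : nb (rcons s c) = nb s && (if rev s is d :: _ then d.1 != c.1 else true).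
Proof.
elim: s => [|d s IH] //=; rewrite IH rev_cons.
case: s IH => [|d' s] //= IH; first by rewrite andbT.
rewrite rev_cons; case: (rev s) => [|x r] /=; by rewrite !andbA.
Qed.


Lemma nb_catI s1 c d s2 : nb (rcons s1 c) -> nb (d :: s2) -> c.1 != d.1 ->
  nb (rcons s1 c ++ d :: s2).
Proof.
elim: s1 => [|x s1 IH] /=; first by move=> _ -> ->.
case/andP=> h1 h2 h3 h4; rewrite (IH h2 h3 h4) andbT.
by case: s1 h1 {IH h2}.
Qed.

Lemma nb_rev s : nb s -> nb (revw s).
Proof.
elim: s => [|c s IH] //= /andP [h1 h2]; rewrite /revw /= rev_cons.
rewrite nb_rcons (IH h2) /=; case: s h1 {IH h2} => [|d s] //= h1.
by rewrite rev_cons rev_rcons /= eq_sym.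
Qed.

Definition uadjF (F : pred E) : rel V := fun u w =>
  [exists e, F e && (((talpha e == u) && (tomega e == w)) || ((talpha e == w) && (tomega e == u)))].

Lemma uadjF_sym F : symmetric (uadjF F).
Proof. by move=> u w; apply/existsP/existsP => [] [e he]; exists e; rewrite orbC. Qed.

Lemma walk_connect F v s w : uwalk v s w -> all (fun c => F c.1) s ->
  connect (uadjF F) v w.
Proof.
elim: s v => [|c s IH] v /=; first by move/eqP ->.
case/andP => /eqP h1 h2 /andP [h3 h4].
apply: (connect_trans _ (IH _ h2 h4)); apply: connect1.
apply/existsP; exists c.1; rewrite h3 /=; rewrite -h1 /ends.
by case: c.2; rewrite !eqxx ?orbT.
Qed.

Section Count.
Variables (F : pred E) (r : V) (e0 : E).
Hypothesis Hc : forall u, connect (uadjF F) r u.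

Definition layer k : {set V} :=
  iter k (fun S => S :|: [set w | [exists u in S, uadjF F u w]]) [set r].

Lemma layerS k : layer k \subset layer k.+1.
Proof. exact: subsetUl. Qed.

Lemma layer_mono k m : k <= m -> layer k \subset layer m.
Proof.
elim: m => [|m IH]; first by rewrite leqn0 => /eqP ->.
rewrite leq_eqVlt => /orP [/eqP -> // | h].
exact: (subset_trans (IH h) (layerS m)).
Qed.

Lemma layer_adj k u w : u \in layer k -> uadjF F u w -> w \in layer k.+1.
Proof.
move=> hu huw; rewrite /layer /= -/(layer k) in_setU; apply/orP; right.
rewrite inE; apply/existsP; exists u; by rewrite hu.
Qed.

Lemma layer_path p y k : y \in layer k -> path (uadjF F) y p ->
  last y p \in layer (k + size p).
Proof.
elim: p y k => [|x p IH] y k /=; first by rewrite addn0.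
move=> hy /andP [h1 h2]; rewrite addnS -addSn; apply: IH => //.
exact: layer_adj hy h1.
Qed.

Lemma in_layer u : exists k, u \in layer k.
Proof.
have [p hp ->] := connectP (Hc u).
exists (0 + size p); apply: layer_path => //; exact: set11.
Qed.

Definition dist u := ex_minn (in_layer u).

Lemma dist_in u : u \in layer (dist u).
Proof. by rewrite /dist; case: ex_minnP. Qed.

Lemma dist_min u k : u \in layer k -> dist u <= k.
Proof. rewrite /dist; case: ex_minnP => m _ h; exact: h. Qed.

Lemma dist_parent u : u != r -> exists e, F e &&
  (((talpha e == u) && (dist (tomega e) < dist u)) ||
   ((tomega e == u) && (dist (talpha e) < dist u))).
Proof.
move=> hu; have hd := dist_in u.
case hk: (dist u) hd => [|k] hd.
  by move: hd; rewrite /layer /= inE => /eqP h; rewrite h eqxx in hu.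
have hnk : u \notin layer k.
  apply/negP => /dist_min; by rewrite hk ltnn.
move: hd; rewrite /layer /= -/(layer k) in_setU (negbTE hnk) /= inE.
case/existsP => x /andP [hx /existsP [e /andP [he hx2]]].
have hdx : dist x < k.+1 by rewrite ltnS; exact: dist_min.
exists e; rewrite he /=.
case/orP: hx2 => /andP [/eqP h1 /eqP h2]; rewrite h1 h2 hdx eqxx ?orbT //.
Qed.

Definition pe u := odflt e0 [pick e | F e &&
  (((talpha e == u) && (dist (tomega e) < dist u)) ||
   ((tomega e == u) && (dist (talpha e) < dist u)))].

Lemma pe_spec u : u != r -> F (pe u) &&
  (((talpha (pe u) == u) && (dist (tomega (pe u)) < dist u)) ||
   ((tomega (pe u) == u) && (dist (talpha (pe u)) < dist u))).
Proof.
move=> /dist_parent [e he]; rewrite /pe; case: pickP => [x hx //|h].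
by rewrite h in he.
Qed.

Lemma count_le : #|V| <= #|[pred e | F e]|.+1.
Proof.
have hinj : {in predC1 r &, injective pe}.
  move=> u w hu hw heq; apply/eqP; apply/negPn/negP => hne.
  have := pe_spec hu; have := pe_spec hw; rewrite heq.
  case/andP=> _ /orP [] /andP [/eqP h1 h2] /andP [_ /orP [] /andP [/eqP h3 h4]].
  - by rewrite -h1 -h3 eqxx in hne.
  - by move: h2 h4; rewrite h1 h3 => h2 h4; have := ltn_trans h2 h4; rewrite ltnn.
  - by move: h2 h4; rewrite h1 h3 => h2 h4; have := ltn_trans h2 h4; rewrite ltnn.
  - by rewrite -h1 -h3 eqxx in hne.
have := card_in_imset hinj; rewrite cardC1 => h.
have hsub : pe @: predC1 r \subset [set e | F e].
  apply/subsetP => x /imsetP [u hu ->]; rewrite inE; by case/andP: (pe_spec hu).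
have := subset_leq_card hsub; rewrite h cardsE.
have : 0 < #|V| by apply/card_gt0P; exists r.
by case: #|V|.
Qed.
End Count.

Lemma connect_uadjF_sym F : connect_sym (uadjF F).
Proof. apply: sym_connect_sym; exact: uadjF_sym. Qed.

Lemma cycle_edge n : forall s v, size s <= n -> uwalk v s v -> nb s -> s != [::] ->
  exists e, connect (uadjF (predC1 e)) (talpha e) (tomega e).
Proof.
elim: n => [|n IH] [|c s1] v //= hsz /andP [/eqP hv hw] hnb _.
case he: (c.1 \in map fst s1).
  case/mapP: he => c' hc' hcc.
  case/splitPr: hc' hw hnb hsz => q r' hw hnb hsz.
  have [m [hq /= /andP [/eqP hm hr]]] := uwalk_catE hw.
  have hsq : size q < n.
    by move: hsz; rewrite size_cat /=; lia.
  case: c c' hcc hv hm hq hnb {hw hr hsz} => e b [e' b'] /= hee hv hm hq hnb; subst e'.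
  case hb: (b' == b).
    move/eqP: hb => hb; subst b'.
    apply: (IH ((e, b) :: q) v) => //=.
    - by rewrite hv eqxx /= -hv hm.
    - have : nb (((e, b) :: q) ++ (e, b) :: r') by [].
      exact: nb_catl.
  have hb' : b' = ~~ b by case: b b' hb {hv hm hq hnb hsq} => [] [].
  subst b'.
  case: q hq hnb hsq => [|d q] hq hnb hsq.
    by move: hnb => /= /andP [] ; rewrite eqxx.
  apply: (IH (d :: q) ((ends (e, b)).2)) => //.
  - exact: ltnW.
  - move: hq; rewrite -hm; clear hm; rewrite /ends /=; by case: b {hv hnb hsq hb}.
  - by move: hnb => /andP [_] /nb_catl.
exists c.1.
have hall : all (fun d => predC1 c.1 d.1) s1.
  apply/allP => d hd /=; apply/negP => /eqP hdc.
  by move: he; rewrite -hdc (map_f fst hd).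
have := walk_connect hw hall.
rewrite -hv /ends; case: c.2 => //=; by rewrite connect_uadjF_sym.
Qed.

Hypothesis Htree : is_tree X.

Lemma tree_nocycle v s : uwalk v s v -> nb s -> s = [::].
Proof.
case: Htree => hc hcard _ hw hnb; apply/eqP; apply/negPn/negP => hne.
have [e he] := cycle_edge (leqnn _) hw hnb hne.
have hc' : forall u w, connect (uadjF (predC1 e)) u w.
  move=> u w; apply: (connect_sub _ (hc u w)) => a b /existsP [f hf].
  case: (f =P e) => [hfe|hfe].
    subst f; case/orP: hf => /andP [/eqP <- /eqP <-] //.
    by rewrite connect_uadjF_sym.
  apply: connect1; apply/existsP; exists f; rewrite /= hf andbT; exact/eqP.
have := @count_le (predC1 e) (talpha e) e (hc' (talpha e)).
have -> : #|[pred f | predC1 e f]| = #|E|.-1 by rewrite -(cardC1 e); apply: eq_card.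
rewrite -hcard; have : 0 < #|E| by apply/card_gt0P; exists e.
by case: #|E| => // k _; rewrite ltnn.
Qed.


Lemma no_loop (e : E) : talpha e != tomega e.
Proof.
apply/negP => /eqP h.
have := @tree_nocycle (talpha e) [:: (e, true)]; rewrite /= h !eqxx => /(_ isT isT).
by [].
Qed.

Lemma nb_walk_uniq v s w s' : uwalk v s w -> nb s -> uwalk v s' w -> nb s' -> s = s'.
Proof.
elim: s v s' => [|c s1 IH] v [|c' s1'] //=.
- move/eqP=> -> _ hw hnb; symmetry; exact: (@tree_nocycle w (c' :: s1')).
- move=> hw hnb /eqP hvw _; subst w; exact: (@tree_nocycle v (c :: s1)).
move=> /andP [/eqP hv hw] hnb /andP [/eqP hv' hw'] hnb'.
case: (c =P c') => [hcc|hcc].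
  subst c'; congr cons; apply: (IH (ends c).2) => //; [exact: nb_cons hnb | exact: nb_cons hnb'].
exfalso.
case: (c.1 =P c'.1) => [he|he].
  have hc' : c' = flip c.
    case: c c' he hcc {hv hv' hw hw' hnb hnb'} => e b [e' b'] /= <- hne.
    by rewrite /flip /=; case: b b' hne => [] [].
  move: hv'; rewrite hc' ends_flip /= => hv'.
  move: (@no_loop c.1); rewrite /ends in hv hv'.
  by case: c.2 hv hv' => /= -> ->; rewrite eqxx.
have hW : uwalk w (revw (c' :: s1') ++ c :: s1) w.
  apply: (uwalk_catI (uwalk_rev (v := v) (s := c' :: s1') _)) => /=.
    by rewrite hv' eqxx hw'.
  by rewrite hv eqxx hw.
have hN : nb (revw (c' :: s1') ++ c :: s1).
  have -> : revw (c' :: s1') = rcons (revw s1') (flip c') by rewrite /revw /= rev_cons.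
  apply: (nb_catI (s1 := revw s1') (c := flip c') (d := c) (s2 := s1)).
  - have := nb_rev (s := c' :: s1') hnb'; by rewrite /revw /= rev_cons.
  - exact: hnb.
  - by rewrite /flip /=; apply/eqP => h; apply: he.
have := tree_nocycle hW hN; by case: (revw _).
Qed.

Definition wverts v (s : seq (E * bool)) := v :: map (fun c => (ends c).2) s.

Lemma mem_wverts u x s w : u \in wverts x s -> uwalk x s w ->
  exists s1 s2, s = s1 ++ s2 /\ uwalk x s1 u.
Proof.
rewrite /wverts; elim: s x => [|c s IH] x /=.
  rewrite mem_seq1 => /eqP -> _. exists [::]. exists [::]. by split => //=; rewrite eqxx.
rewrite in_cons => /orP [/eqP -> _|hu /andP [/eqP hx hw]].
  exists [::]. exists (c :: s). by split => //=; rewrite eqxx.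
have [s1 [s2 [-> h]]] := IH _ hu hw.
exists (c :: s1), s2; split => //=; by rewrite hx eqxx.
Qed.

Lemma wverts_uniq v s w : uwalk v s w -> nb s -> uniq (wverts v s).
Proof.
elim: s v => [|c s IH] v //= /andP [/eqP hv hw] hnb.
have := IH _ hw (nb_cons hnb); rewrite /wverts /= => ->; rewrite andbT.
apply/negP => hin.
have [s1 [s2 [hs h1]]] := mem_wverts (x := (ends c).2) (s := s) hin hw.
have := @tree_nocycle v (c :: s1); rewrite /= hv eqxx h1 => /(_ isT).
have : nb ((c :: s1) ++ s2) by rewrite /= -hs.
by move/nb_catl => h2 /(_ h2).
Qed.

Lemma nb_size v s w : uwalk v s w -> nb s -> size s <= #|E|.
Proof.
move=> hw hnb; have /card_uniqP hu := wverts_uniq hw hnb.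
case: Htree => _ hcard _.
have := max_card (mem (wverts v s)); rewrite hu /= size_map -hcard.
by rewrite ltnS.
Qed.

Definition fw (es : seq E) := map (fun e => (e, true)) es.

Lemma dwalk_uwalk v es w : dwalk Sigma X v es w = uwalk v (fw es) w.
Proof. by elim: es v => [|e es IH] v //=; rewrite IH. Qed.

Lemma fw_nb v es w : dwalk Sigma X v es w -> nb (fw es).
Proof.
elim: es v => [|e es IH] v //= /andP [_ h]; rewrite (IH _ h) andbT.
case: es h {IH} => [|f es] //= /andP [/eqP hf _]; apply/eqP => hef.
by move: (no_loop e); rewrite -hf hef eqxx.
Qed.

Lemma dwalk_uniq v es es' w : dwalk Sigma X v es w -> dwalk Sigma X v es' w -> es = es'.
Proof.
move=> h h'; have hn := fw_nb h; have hn' := fw_nb h'.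
rewrite dwalk_uwalk in h; rewrite dwalk_uwalk in h'.
have hi : injective (fun e : E => (e, true)) by move=> a b [].
exact: (inj_map hi (nb_walk_uniq h hn h' hn')).
Qed.

Lemma dwalk_closed v es : dwalk Sigma X v es v -> es = [::].
Proof. move=> h; symmetry; apply: (dwalk_uniq (es := [::]) _ h) => /=; exact: eqxx. Qed.

Lemma dwalk_cat v s1 s2 w : dwalk Sigma X v (s1 ++ s2) w -> exists m, dwalk Sigma X v s1 m /\ dwalk Sigma X m s2 w.
Proof.
rewrite dwalk_uwalk /fw map_cat => /uwalk_catE [m [h1 h2]]; exists m.
by rewrite !dwalk_uwalk.
Qed.

Lemma dwalk_catI v s1 m s2 w : dwalk Sigma X v s1 m -> dwalk Sigma X m s2 w -> dwalk Sigma X v (s1 ++ s2) w.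
Proof. rewrite !dwalk_uwalk /fw map_cat; exact: uwalk_catI. Qed.

Lemma trunk_incident (v0 : V) (p s : seq E) (w m : V) (f : E) : dwalk Sigma X v0 p m -> dwalk Sigma X m s w -> f \in p ++ s ->
  (talpha f == m) || (tomega f == m) -> (Some f == ohead s) || (Some f == ohead (rev p)).
Proof.
move=> hp hs; rewrite mem_cat => /orP [] hf hinc.
  case/splitPr: hf hp => p1 p2 hp.
  case: p2 hp => [|a p2] hp.
    by rewrite rev_cat /= eqxx orbT.
  have [x [_ /= /andP [/eqP hx hr]]] := dwalk_cat hp.
  exfalso; case/orP: hinc => /eqP hm.
    have := @dwalk_closed m (f :: a :: p2); rewrite /= hm eqxx hr => /(_ isT).
    by [].
  rewrite hm in hr; by have := @dwalk_closed m (a :: p2) hr.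
case/splitPr: hf hs => s1 s2 hs.
case: s1 hs => [|a s1] hs; first by rewrite /= eqxx.
have [x [h1 /= /andP [/eqP hx hr]]] := dwalk_cat hs.
exfalso; case/orP: hinc => /eqP hm.
  rewrite -hx hm in h1; by have := dwalk_closed h1.
have h2 : dwalk Sigma X m (rcons (a :: s1) f) m.
  rewrite -cats1; apply: (dwalk_catI h1) => /=; by rewrite hx hm !eqxx.
by have := dwalk_closed h2; case: s1 {h1 h2 hs}.
Qed.

End Graph.

Section Tau.
Variable M : adequate_monoid.
Variable Sigma : Type.
Variable chi : Sigma -> M.
Local Notation "a * b" := (amul a b).

Section OneTree.
Variable X : tree Sigma.
Local Notation V := (tV X).
Local Notation E := (tE X).

Fixpoint tauI (n : nat) (v : V) (excl : pred E) : idemT M :=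
  match n with
  | 0 => ione M
  | n'.+1 =>
    imul
      (\big[@imul M/ione M]_(e : E | ~~ excl e && (talpha e == v))
          aplusI (chi (tlab e) * ival (tauI n' (tomega e) (pred1 e))))
      (\big[@imul M/ione M]_(e : E | ~~ excl e && (tomega e == v))
          astarI (ival (tauI n' (talpha e) (pred1 e)) * chi (tlab e)))
  end.

Lemma tau_atE n v excl : tau_at Sigma M chi X n v excl = ival (tauI n v excl).
Proof.
elim: n v excl => [|n IH] v excl //=.
rewrite !big_ival; congr amul; apply: eq_bigr => e _ /=; by rewrite IH.
Qed.

Lemma tau_excl n v ex1 ex2 :
  (forall e, (talpha e == v) || (tomega e == v) -> ex1 e = ex2 e) ->
  tauI n v ex1 = tauI n v ex2.
Proof.
case: n => [|n] // h /=; congr imul; apply: eq_bigl => e.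
  case he: (talpha e == v); rewrite ?andbF ?andbT // h ?he //.
case he: (tomega e == v); rewrite ?andbF ?andbT // h ?he ?orbT //.
Qed.

Definition NW k (v : V) (excl : pred E) := forall s w, uwalk v s w -> nb s -> headok excl s -> size s < k.

Lemma fuel_gen n : forall v excl m, NW n.+1 v excl -> n <= m -> tauI n v excl = tauI m v excl.
Proof.
elim: n => [|n IH] v excl [|m] hNW //= hnm.
  have h0 : forall e : E, (~~ excl e && (talpha e == v)) = false.
    move=> e; apply/negP => /andP [he /eqP hv].
    have := hNW [:: (e, true)] (tomega e); rewrite /= hv !eqxx he => /(_ isT isT isT).
    by [].
  have h1 : forall e : E, (~~ excl e && (tomega e == v)) = false.
    move=> e; apply/negP => /andP [he /eqP hv].
    have := hNW [:: (e, false)] (talpha e); rewrite /= hv !eqxx he => /(_ isT isT isT).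
    by [].
  rewrite (eq_bigl _ _ h0) (eq_bigl _ _ h1) !big_pred0 //.
  by apply: idemT_eq; rewrite /= amul1.
congr imul; apply: eq_bigr => e /andP [he hv]; rewrite (IH _ _ m) //.
- move=> s w hw hnb hh.
  have := hNW ((e, true) :: s) w; rewrite /= (eqP hv) eqxx hw he.
  case: s hw hnb hh => [|d s] hw hnb hh /=; first by move=> /(_ isT isT isT).
  move: hh => /= hde; rewrite eq_sym hde => /(_ isT hnb isT).
  by rewrite ltnS.
- move=> s w hw hnb hh.
  have := hNW ((e, false) :: s) w; rewrite /= (eqP hv) eqxx hw he.
  case: s hw hnb hh => [|d s] hw hnb hh /=; first by move=> /(_ isT isT isT).
  move: hh => /= hde; rewrite eq_sym hde => /(_ isT hnb isT).
  by rewrite ltnS.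
Qed.

Hypothesis Htree : is_tree X.

Lemma fuel n m v excl : #|E| <= n -> n <= m -> tauI n v excl = tauI m v excl.
Proof.
move=> h1 h2; apply: fuel_gen => // s w hw hnb _.
rewrite ltnS; apply: leq_trans (nb_size Htree hw hnb) h1.
Qed.


Local Notation tX := (trunk Sigma X).

Lemma trunk_spec : dwalk Sigma X (tstart X) tX (tend X).
Proof.
case: Htree => _ _ [es h]; rewrite /trunk.
apply: (epsilon_spec (inhabits [::]) (fun es => dwalk Sigma X (tstart X) es (tend X))).
by exists es.
Qed.

Lemma tau_trunkE v : tau_trunk Sigma M chi X v = ival (tauI #|E| v (fun f => f \in tX)).
Proof. exact: tau_atE. Qed.

Lemma idem_trunk v : idem (tau_trunk Sigma M chi X v).
Proof. rewrite tau_trunkE; exact: ivalP. Qed.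

Lemma Some_eq (f e : E) : (Some f == Some e) = (f == e).
Proof. by []. Qed.

Lemma plus_aux s : forall p v excl n, p ++ s = tX ->
  dwalk Sigma X (tstart X) p v -> dwalk Sigma X v s (tend X) ->
  (forall e, (talpha e == v) || (tomega e == v) -> excl e = (e \in tX) && (Some e != ohead s)) ->
  #|E| <= n -> ival (tauI n v excl) = aplus (rho_aux Sigma M chi X v s).
Proof.
elim: s => [|e s IH] p v excl n hps hp hs hex hn.
  change (rho_aux Sigma M chi X v [::]) with (tau_trunk Sigma M chi X v).
  rewrite tau_trunkE aplus_idem; last exact: ivalP.
  rewrite (@tau_excl n v excl (fun f => f \in tX)); last first.
    by move=> f hf; rewrite hex // andbT.
  by rewrite (@fuel #|E| n).
move: hs => /= /andP [/eqP he hs].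
have heT : e \in tX by rewrite -hps mem_cat in_cons eqxx orbT.
have hev : tomega e != v by rewrite -he eq_sym no_loop.
rewrite (@fuel n n.+1) // (aplus_idem_mul _ (idem_trunk v)) aplus_mul_plus.
have hp' : dwalk Sigma X (tstart X) (rcons p e) (tomega e).
  rewrite -cats1; apply: (dwalk_catI hp) => /=; by rewrite he !eqxx.
rewrite -(IH (rcons p e) (tomega e) (pred1 e) n) //; last first.
- move=> f hf /=.
  case: (f =P e) => [->|hfe].
    rewrite heT /=; case: s hs {IH hps hex} => [|g s] hs //; move: hs => /= /andP [/eqP hg _].
    rewrite /= Some_eq; apply/esym/negP => /eqP hge; move: (no_loop Htree e); by rewrite -hg hge eqxx.
  case hfT: (f \in tX) => //=.
  have := trunk_incident Htree hp' hs (f := f).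
  rewrite cat_rcons hps hfT => /(_ isT hf); rewrite rev_rcons /= Some_eq.
  by move/eqP: hfe => /negbTE ->; rewrite orbF => ->.
- by rewrite cat_rcons.
rewrite tau_trunkE (@fuel #|E| n.+1) //.
change (ival (tauI n.+1 v excl) = ival (imul (tauI n.+1 v (fun f => f \in tX))
   (aplusI (chi (tlab e) * ival (tauI n (tomega e) (pred1 e)))))).
congr ival; rewrite /=.
rewrite (bigD1 e) /=; last by rewrite hex ?he ?eqxx // heT ?Some_eq ?eqxx.
set Te := aplusI _.
set A0 := \big[_/_]_(i | (~~ (i \in tX)) && _) _.
have -> : \big[@imul M/ione M]_(i | ~~ excl i && (talpha i == v) && (i != e))
   aplusI (chi (tlab i) * ival (tauI n (tomega i) (pred1 i))) = A0.
  apply: eq_bigl => f; case hv: (talpha f == v); rewrite ?andbF // !andbT.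
  rewrite hex ?hv // Some_eq.
  case: (f =P e) => [->|hfe]; first by rewrite heT.
  by rewrite /= !andbT.
have -> : \big[@imul M/ione M]_(i | ~~ excl i && (tomega i == v))
   astarI (ival (tauI n (talpha i) (pred1 i)) * chi (tlab i)) =
   \big[@imul M/ione M]_(i | ~~ (i \in tX) && (tomega i == v))
   astarI (ival (tauI n (talpha i) (pred1 i)) * chi (tlab i)).
  apply: eq_bigl => f; case hv: (tomega f == v); rewrite ?andbF // !andbT.
  rewrite hex ?hv ?orbT // Some_eq.
  case: (f =P e) => [hfe|hfe]; last by rewrite andbT.
  by move: hv; rewrite hfe (negbTE hev).
  by rewrite [imul Te A0]imulC -!imulA [imul Te _]imulC.
exact: leqW.
Qed.


Lemma rho_aux_rcons p e : forall v, rho_aux Sigma M chi X v (rcons p e) =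
  rho_aux Sigma M chi X v p * (chi (tlab e) * tau_trunk Sigma M chi X (tomega e)).
Proof.
elim: p => [|f p IH] v //=.
by rewrite IH !amulA.
Qed.

Lemma star_aux p : forall v excl n s, p ++ s = tX ->
  dwalk Sigma X (tstart X) p v -> dwalk Sigma X v s (tend X) ->
  (forall e, (talpha e == v) || (tomega e == v) -> excl e = (e \in tX) && (Some e != ohead (rev p))) ->
  #|E| <= n -> ival (tauI n v excl) = astar (rho_aux Sigma M chi X (tstart X) p).
Proof.
elim/last_ind: p => [|p e IH] v excl n s hps hp hs hex hn.
  move: hp => /= /eqP hv; subst v.
  change (rho_aux Sigma M chi X (tstart X) [::]) with (tau_trunk Sigma M chi X (tstart X)).
  rewrite tau_trunkE astar_idem; last exact: ivalP.
  rewrite (@tau_excl n _ excl (fun f => f \in tX)); last first.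
    by move=> f hf; rewrite hex // andbT.
  by rewrite (@fuel #|E| n).
have hp2 : dwalk Sigma X (tstart X) (p ++ [:: e]) v by rewrite cats1.
have [u [hp' /= /andP [/eqP he /eqP hv]]] := dwalk_cat hp2.
subst v.
have heT : e \in tX by rewrite -hps mem_cat mem_rcons in_cons eqxx.
have hev : talpha e != tomega e by exact: no_loop.
rewrite (@fuel n n.+1) // rho_aux_rcons amulA (astar_mul_idem _ (idem_trunk _)) astar_mul_star.
rewrite -(IH u (pred1 e) n (e :: s)) //; last first.
- move=> f hf /=.
  case: (f =P e) => [->|hfe].
    rewrite heT /=.
    case/lastP: p hp' {IH hps hex hp hp2} => [|p g] hp' //.
    have hp3 : dwalk Sigma X (tstart X) (p ++ [:: g]) u by rewrite cats1.
    have [x [_ /= /andP [/eqP hg /eqP hgo]]] := dwalk_cat hp3.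
    rewrite rev_rcons /= Some_eq; apply/esym/negP => /eqP hge.
    subst g; by move: (no_loop Htree e); rewrite he hgo eqxx.
  case hfT: (f \in tX) => //=.
  have hs' : dwalk Sigma X u (e :: s) (tend X) by rewrite /= he eqxx hs.
  have := trunk_incident Htree hp' hs' (f := f).
  rewrite -cats1 -catA /= in hps.
  rewrite hps hfT => /(_ isT hf) /= ; rewrite Some_eq.
  by move/eqP: hfe => /negbTE ->; rewrite /= => /eqP ->; rewrite eqxx.
- by rewrite /= he eqxx hs.
- by rewrite -hps -cats1 -catA.
rewrite tau_trunkE (@fuel #|E| n.+1) //.
change (ival (tauI n.+1 (tomega e) excl) = ival (imul
   (astarI (ival (tauI n u (pred1 e)) * chi (tlab e)))
   (tauI n.+1 (tomega e) (fun f => f \in tX)))).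
congr ival; rewrite /=.
rewrite [X in imul _ X](bigD1 e) /=; last by rewrite hex ?eqxx ?orbT // heT rev_rcons /= ?Some_eq ?eqxx.
rewrite he.
set Se := astarI _.
set B0 := \big[_/_]_(i | (~~ (i \in tX)) && (tomega i == tomega e)) _.
have -> : \big[@imul M/ione M]_(i | ~~ excl i && (tomega i == tomega e) && (i != e))
   astarI (ival (tauI n (talpha i) (pred1 i)) * chi (tlab i)) = B0.
  apply: eq_bigl => f; case hv: (tomega f == tomega e); rewrite ?andbF // !andbT.
  rewrite hex ?hv ?orbT // rev_rcons /= Some_eq.
  case: (f =P e) => [->|hfe]; first by rewrite heT.
  by rewrite /= !andbT.
have -> : \big[@imul M/ione M]_(i | ~~ excl i && (talpha i == tomega e))
   aplusI (chi (tlab i) * ival (tauI n (tomega i) (pred1 i))) =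
   \big[@imul M/ione M]_(i | ~~ (i \in tX) && (talpha i == tomega e))
   aplusI (chi (tlab i) * ival (tauI n (tomega i) (pred1 i))).
  apply: eq_bigl => f; case hv: (talpha f == tomega e); rewrite ?andbF // !andbT.
  rewrite hex ?hv // rev_rcons /= Some_eq.
  case: (f =P e) => [hfe|hfe]; last by rewrite andbT.
  by move: hv; rewrite hfe (negbTE hev).
  by rewrite imulA [imul _ Se]imulC -imulA.
exact: leqW.
Qed.

End OneTree.
End Tau.

Section PS.
Variable M : adequate_monoid.
Variable Sigma : Type.
Variable chi : Sigma -> M.
Variable X : tree Sigma.
Hypothesis Htree : is_tree X.

Lemma dwalk_plus v es w : dwalk Sigma (tplus X) v es w = dwalk Sigma X v es w.
Proof. by elim: es v => [|e es IH] v //=; rewrite IH. Qed.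
Lemma dwalk_star v es w : dwalk Sigma (tstar X) v es w = dwalk Sigma X v es w.
Proof. by elim: es v => [|e es IH] v //=; rewrite IH. Qed.
Lemma tau_at_plus n v excl : tau_at Sigma M chi (tplus X) n v excl = tau_at Sigma M chi X n v excl.
Proof. elim: n v excl => [|n IH] v excl //=. congr amul; apply: eq_bigr => e _; by rewrite IH. Qed.
Lemma tau_at_star n v excl : tau_at Sigma M chi (tstar X) n v excl = tau_at Sigma M chi X n v excl.
Proof. elim: n v excl => [|n IH] v excl //=. congr amul; apply: eq_bigr => e _; by rewrite IH. Qed.

Lemma trunk_plus : trunk Sigma (tplus X) = [::].
Proof.
have h : dwalk Sigma (tplus X) (tstart (tplus X)) (trunk Sigma (tplus X)) (tend (tplus X)).
  rewrite /trunk; apply: (@epsilon_spec _ (inhabits [::]) (fun es => dwalk Sigma (tplus X) (tstart (tplus X)) es (tend (tplus X)))).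
  exists [::]; exact: eqxx.
rewrite dwalk_plus in h; exact: (@dwalk_closed Sigma X Htree (tstart X) (trunk Sigma (tplus X)) h).
Qed.

Lemma trunk_star : trunk Sigma (tstar X) = [::].
Proof.
have h : dwalk Sigma (tstar X) (tstart (tstar X)) (trunk Sigma (tstar X)) (tend (tstar X)).
  rewrite /trunk; apply: (@epsilon_spec _ (inhabits [::]) (fun es => dwalk Sigma (tstar X) (tstart (tstar X)) es (tend (tstar X)))).
  exists [::]; exact: eqxx.
rewrite dwalk_star in h; exact: (@dwalk_closed Sigma X Htree (tend X) (trunk Sigma (tstar X)) h).
Qed.

Lemma rho_plus : rho chi (tplus X) = aplus (rho chi X).
Proof.
rewrite /rho trunk_plus /= /tau_trunk tau_at_plus trunk_plus tau_atE.
apply: (@plus_aux M Sigma chi X Htree (trunk Sigma X) [::]) => //.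
- exact: eqxx.
- exact: trunk_spec.
- move=> e he; rewrite /= in_nil.
  case hT: (e \in trunk Sigma X) => //=.
  have := trunk_incident Htree (p := [::]) (eqxx (tstart X)) (trunk_spec Htree) (f := e).
  by rewrite /= hT => /(_ isT he); rewrite orbF => ->.
Qed.

Lemma rho_star : rho chi (tstar X) = astar (rho chi X).
Proof.
rewrite /rho trunk_star /= /tau_trunk tau_at_star trunk_star tau_atE.
apply: (@star_aux M Sigma chi X Htree (trunk Sigma X) (tend X) _ _ [::]) => //.
- by rewrite cats0.
- exact: trunk_spec.
- exact: eqxx.
- move=> e he; rewrite /= in_nil.
  case hT: (e \in trunk Sigma X) => //=.
  have := trunk_incident Htree (trunk_spec Htree) (s := [::]) (eqxx (tend X)) (f := e).
  by rewrite cats0 hT => /(_ isT he) /= => ->.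
Qed.

End PS.

Lemma rho_triv (M : adequate_monoid) (Sigma : Type) (chi : Sigma -> M) :
  rho chi (ttriv Sigma) = aone M.
Proof.
rewrite /rho; case: (trunk Sigma (ttriv Sigma)) => [|[]] /=.
rewrite /tau_trunk.
have -> : #|tE (ttriv Sigma)| = 0 by exact: card_void.
by []. Qed.

Lemma big_reindex (R : Type) (idx : R) (op : Monoid.com_law idx) (I J : finType) (h : I -> J)
  (PI : pred I) (PJ : pred J) (F : J -> R) :
  injective h -> (forall j, PJ j -> exists i, h i = j) -> (forall i, PJ (h i) = PI i) ->
  \big[op/idx]_(j | PJ j) F j = \big[op/idx]_(i | PI i) F (h i).
Proof.
move=> hinj hsurj hP.
have -> : \big[op/idx]_(i | PI i) F (h i) = \big[op/idx]_(i in [set i | PJ (h i)]) F (h i).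
  by apply: eq_bigl => i; rewrite inE hP.
rewrite -big_imset; last by move=> x y _ _; exact: hinj.
apply: eq_bigl => j; apply/idP/imsetP => [hj|[i hi ->]].
  have [i hi] := hsurj j hj; exists i => //; by rewrite inE hi.
by rewrite inE in hi.
Qed.

Section Sim.
Variable M : adequate_monoid.
Variable Sigma : Type.
Variable chi : Sigma -> M.
Variables A B : tree Sigma.
Variable f : tV A -> tV B.
Variable g : tE A -> tE B.
Variable bad : pred (tV A).
Hypothesis f_inj : injective f.
Hypothesis g_inj : injective g.
Hypothesis galpha : forall e, talpha (g e) = f (talpha e).
Hypothesis gomega : forall e, tomega (g e) = f (tomega e).
Hypothesis glab : forall e, tlab (g e) = tlab e.
Hypothesis gsurj : forall a eB, ~~ bad a -> (talpha eB == f a) || (tomega eB == f a) ->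
  exists eA, g eA = eB.

Definition Cond (a : tV A) (exA : pred (tE A)) :=
  forall s w, uwalk a s w -> nb s -> headok exA s -> ~~ bad w.

Lemma Cond_child_alpha a exA e : Cond a exA -> ~~ exA e -> talpha e == a ->
  Cond (tomega e) (pred1 e).
Proof.
move=> hC he ha s w hw hnb hh; apply: (hC ((e, true) :: s)) => //=.
- by rewrite ha hw.
- rewrite hnb andbT; case: s hw hnb hh => [|d s] //= _ _; by rewrite eq_sym.
Qed.

Lemma Cond_child_omega a exA e : Cond a exA -> ~~ exA e -> tomega e == a ->
  Cond (talpha e) (pred1 e).
Proof.
move=> hC he ha s w hw hnb hh; apply: (hC ((e, false) :: s)) => //=.
- by rewrite ha hw.
- rewrite hnb andbT; case: s hw hnb hh => [|d s] //= _ _; by rewrite eq_sym.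
Qed.

Lemma sim n : forall a exA exB, (forall e, exB (g e) = exA e) -> Cond a exA ->
  tauI chi n (f a) exB = tauI chi n a exA.
Proof.
elim: n => [|n IH] a exA exB hex hC //=.
have hgood : ~~ bad a by apply: (hC [::]) => //=.
have hpe : forall e e', pred1 (g e) (g e') = pred1 e e'.
  by move=> e e' /=; rewrite (inj_eq g_inj).
congr imul.
  rewrite (@big_reindex _ _ _ _ _ g (fun e => ~~ exA e && (talpha e == a)) _ _) //.
  - apply: eq_bigr => e /andP [he ha].
    rewrite glab gomega (IH _ (pred1 e)) //; last exact: Cond_child_alpha hC he ha.
  - move=> eB /andP [_ ha]; apply: gsurj hgood _; by rewrite ha.
  - by move=> e; rewrite hex galpha (inj_eq f_inj).
rewrite (@big_reindex _ _ _ _ _ g (fun e => ~~ exA e && (tomega e == a)) _ _) //.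
- apply: eq_bigr => e /andP [he ha].
  rewrite glab galpha (IH _ (pred1 e)) //; last exact: Cond_child_omega hC he ha.
- move=> eB /andP [_ ha]; apply: gsurj hgood _; by rewrite ha orbT.
- by move=> e; rewrite hex gomega (inj_eq f_inj).
Qed.

End Sim.

Lemma connect_map (A B : finType) (eA : rel A) (eB : rel B) (h : A -> B) :
  (forall x y, eA x y -> eB (h x) (h y)) -> forall x y, connect eA x y -> connect eB (h x) (h y).
Proof.
move=> H x y /connectP [p hp ->]; elim: p x hp => [|z p IH] x /=; first by rewrite connect0.
case/andP => h1 h2; apply: connect_trans (connect1 (H _ _ h1)) (IH _ h2).
Qed.

Lemma uadj_sym (Sigma : Type) (Z : tree Sigma) : symmetric (uadj Sigma Z).
Proof. by move=> u w; apply/existsP/existsP => [] [e he]; exists e; rewrite orbC. Qed.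

Section Mul.
Variable Sigma : Type.
Variables X Y : tree Sigma.
Hypothesis HX : is_tree X.
Hypothesis HY : is_tree Y.
Local Notation T := (tmul X Y).
Local Notation emb := (embY Sigma X Y).
Local Notation tX := (trunk Sigma X).
Local Notation tY := (trunk Sigma Y).

Lemma embY_start : emb (tstart Y) = inl (tend X).
Proof. by rewrite /embY insubF //= eqxx. Qed.

Lemma embY_cases v : (v = tstart Y /\ emb v = inl (tend X)) \/
  (exists u, val u = v /\ emb v = inr u).
Proof.
rewrite /embY; case: insubP => [u hu hv|hn]; first by right; exists u.
by left; move/negPn/eqP: hn.
Qed.

Lemma embY_inj : injective emb.
Proof.
move=> a b; case: (embY_cases a) => [[-> ->]|[u [<- ->]]];
  case: (embY_cases b) => [[-> ->]|[u' [<- ->]]] //.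
by case=> ->.
Qed.

Lemma embY_inl v x : emb v = inl x -> v = tstart Y /\ x = tend X.
Proof. by case: (embY_cases v) => [[-> ->] [<-]|[u [_ ->]]]. Qed.

Lemma emb_eq_start v : (emb v == inl (tend X)) = (v == tstart Y).
Proof. by rewrite -embY_start (inj_eq embY_inj). Qed.

Lemma inl_neq_emb x v : x != tend X -> (inl x == emb v) = false.
Proof.
move=> hx; apply/negP => /eqP h; have [_ h2] := embY_inl (esym h).
by rewrite h2 eqxx in hx.
Qed.

Lemma mem_tT_inl (e : tE X) (s1 : seq (tE X)) (s2 : seq (tE Y)) :
  ((inl e : tE T) \in map inl s1 ++ map inr s2) = (e \in s1).
Proof.
rewrite mem_cat (mem_map (@inl_inj _ _)); case: (e \in s1) => //=.
by apply/mapP => -[x _].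
Qed.

Lemma mem_tT_inr (e : tE Y) (s1 : seq (tE X)) (s2 : seq (tE Y)) :
  ((inr e : tE T) \in map inl s1 ++ map inr s2) = (e \in s2).
Proof.
rewrite mem_cat (mem_map (@inr_inj _ _)).
have -> : ((inr e : tE T) \in map inl s1) = false by apply/mapP => -[x _].
done.
Qed.

Lemma dwalk_inl v es w : dwalk Sigma T (inl v) (map inl es) (inl w) = dwalk Sigma X v es w.
Proof. by elim: es v => [|e es IH] v //=; rewrite IH. Qed.

Lemma dwalk_inr v es w : dwalk Sigma T (emb v) (map inr es) (emb w) = dwalk Sigma Y v es w.
Proof.
elim: es v => [|e es IH] v /=; first exact: (inj_eq embY_inj).
by rewrite IH (inj_eq embY_inj).
Qed.

Definition tT : seq (tE T) := map inl tX ++ map inr tY.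

Lemma tT_walk : dwalk Sigma T (tstart T) tT (tend T).
Proof.
rewrite /tT; apply: (@dwalk_catI Sigma T (tstart T) (map inl tX) (inl (tend X)) (map inr tY) (tend T)).
  by rewrite /= dwalk_inl; exact: trunk_spec.
rewrite -embY_start /= dwalk_inr; exact: trunk_spec.
Qed.

Lemma tmul_tree : is_tree T.
Proof.
case: HX => cX hX _; case: HY => cY hY _.
split; last by exists tT; exact: tT_walk.
- have hr : forall a, connect (uadj Sigma T) a (inl (tend X)).
    case=> [x|u].
      apply: (connect_map (h := inl) _ (cX x (tend X))) => a b /existsP [e he].
      by apply/existsP; exists (inl e).
    have -> : (inr u : tV T) = emb (val u).
      by case: (embY_cases (val u)) => [[h _]|[u' [hu ->]]];
        [move: (valP u); rewrite h eqxx | congr inr; apply: val_inj].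
    rewrite -embY_start.
    apply: (connect_map (h := emb) _ (cY (val u) (tstart Y))) => a b /existsP [e he].
    apply/existsP; exists (inr e) => /=; by rewrite !(inj_eq embY_inj).
  move=> a b; apply: connect_trans (hr a) _.
  rewrite (sym_connect_sym (@uadj_sym Sigma T)); exact: hr.
- rewrite /= /tmulV !card_sum card_sig.
  have -> : #|[pred x : tV Y | x != tstart Y]| = #|tV Y|.-1.
    rewrite -(cardC1 (tstart Y)); exact: eq_card.
  by rewrite -hX -hY /= addSn.
Qed.

Lemma trunk_T : trunk Sigma T = tT.
Proof.
apply: (dwalk_uniq tmul_tree (trunk_spec tmul_tree)); exact: tT_walk.
Qed.

End Mul.

Lemma cond_unique (Sigma : Type) (Z : tree Sigma) (HZ : is_tree Z) (v t : tV Z)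
  (c : seq (tE Z * bool)) (excl : pred (tE Z)) :
  uwalk v c t -> nb c -> c != [::] -> all (fun x => excl x.1) c ->
  Cond (fun w => w == t) v excl.
Proof.
move=> hc hn hne hall s w hw hnb hh; apply/negP => /eqP hwt; subst w.
have hsc := nb_walk_uniq HZ hw hnb hc hn; subst s.
case: c hc hn hne hall hh hw hnb => [|x c] //= _ _ _ /andP [hx _].
by rewrite hx.
Qed.

Section Mul2.
Variable M : adequate_monoid.
Variable Sigma : Type.
Variable chi : Sigma -> M.
Variables X Y : tree Sigma.
Hypothesis HX : is_tree X.
Hypothesis HY : is_tree Y.
Local Notation T := (tmul X Y).
Local Notation emb := (embY Sigma X Y).
Local Notation tX := (trunk Sigma X).
Local Notation tY := (trunk Sigma Y).
Local Notation "a * b" := (amul a b).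

Let HT := tmul_tree HX HY.

Lemma cardET : #|tE T| = #|tE X| + #|tE Y|.
Proof. exact: card_sum. Qed.

Lemma gsurjX (a : tV X) (eB : tE T) : ~~ (a == tend X) ->
  (talpha eB == inl a) || (tomega eB == inl a) -> exists eA, inl eA = eB.
Proof.
case: eB => [e|e] ha; first by exists e.
by rewrite /= !(eq_sym _ (inl a)) !inl_neq_emb.
Qed.

Lemma inl_emb_neq (x : tV X) (a : tV Y) : a != tstart Y -> (inl x == emb a) = false.
Proof.
move=> ha; apply/negP => /eqP h; have [h1 _] := embY_inl (esym h).
by rewrite h1 eqxx in ha.
Qed.

Lemma gsurjY (a : tV Y) (eB : tE T) : ~~ (a == tstart Y) ->
  (talpha eB == emb a) || (tomega eB == emb a) -> exists eA, inr eA = eB.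
Proof.
case: eB => [e|e] ha; last by exists e.
by rewrite /= !inl_emb_neq.
Qed.

Lemma simX n (a : tV X) exA exB :
  (forall e, exB (inl e) = exA e) -> Cond (fun w => w == tend X) a exA ->
  tauI chi n (inl a : tV T) exB = tauI chi n a exA.
Proof.
apply: (@sim M Sigma chi X T inl inl (fun w => w == tend X)) => //.
- exact: inl_inj.
- exact: inl_inj.
- exact: gsurjX.
Qed.

Lemma simY n (a : tV Y) exA exB :
  (forall e, exB (inr e) = exA e) -> Cond (fun w => w == tstart Y) a exA ->
  tauI chi n (emb a : tV T) exB = tauI chi n a exA.
Proof.
apply: (@sim M Sigma chi Y T emb inr (fun w => w == tstart Y)) => //.
- exact: embY_inj.
- exact: inr_inj.
- exact: gsurjY.
Qed.


Lemma vertX v p d : p ++ d = tX -> dwalk Sigma X v d (tend X) -> v != tend X ->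
  tau_trunk Sigma M chi T (inl v) = tau_trunk Sigma M chi X v.
Proof.
move=> hps hd hv; rewrite !tau_trunkE (trunk_T HX HY); congr ival.
rewrite (@simX _ _ (fun f => f \in tX)); last first.
- apply: (cond_unique HX (c := fw d)).
  + by rewrite -dwalk_uwalk.
  + exact (fw_nb HX hd).
  + by case: d hd {hps} => //= /eqP h; rewrite h eqxx in hv.
  + apply/allP => x /mapP [e he ->] /=; by rewrite -hps mem_cat he orbT.
- by move=> e; rewrite /tT mem_tT_inl.
by rewrite (@fuel M Sigma chi X HX #|tE X| #|tE T|) // cardET leq_addr.
Qed.

Lemma vertY w p d : p ++ d = tY -> dwalk Sigma Y (tstart Y) p w -> p != [::] ->
  tau_trunk Sigma M chi T (emb w) = tau_trunk Sigma M chi Y w.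
Proof.
move=> hps hp hne; rewrite !tau_trunkE (trunk_T HX HY); congr ival.
rewrite (@simY _ _ (fun f => f \in tY)); last first.
- apply: (cond_unique HY (c := revw (fw p))).
  + apply: uwalk_rev; by rewrite -dwalk_uwalk.
  + apply: nb_rev; exact (fw_nb HY hp).
  + by case: p hp hne {hps} => //= e p; rewrite /revw /= rev_cons; case: (rev _).
  + apply/allP => x; rewrite mem_rev => /mapP [y /mapP [e he ->] ->] /=.
    by rewrite -hps mem_cat he.
- by move=> e; rewrite /tT mem_tT_inr.
by rewrite (@fuel M Sigma chi Y HY #|tE Y| #|tE T|) // cardET leq_addl.
Qed.


Lemma junction :
  tau_trunk Sigma M chi T (inl (tend X)) =
  tau_trunk Sigma M chi X (tend X) * tau_trunk Sigma M chi Y (tstart Y).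
Proof.
rewrite !tau_trunkE (trunk_T HX HY).
set N := #|tE T|.
rewrite (@fuel M Sigma chi T HT N N.+1) //.
rewrite (@fuel M Sigma chi X HX #|tE X| N.+1); last by rewrite /N cardET; apply: leqW; exact: leq_addr.
  2: by [].
rewrite (@fuel M Sigma chi Y HY #|tE Y| N.+1); last by rewrite /N cardET; apply: leqW; exact: leq_addl.
  2: by [].
change (ival (tauI chi N.+1 (inl (tend X) : tV T) (fun f => f \in tT X Y)) =
  ival (imul (tauI chi N.+1 (tend X) (fun f => f \in tX))
             (tauI chi N.+1 (tstart Y) (fun f => f \in tY)))).
congr ival; rewrite /=.
rewrite !big_sumType /=.
rewrite -Monoid.mulmACA; congr imul; congr imul.
- apply: eq_big => [e|e /andP [he ha]].
    by rewrite /tT mem_tT_inl.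
  rewrite (@simX _ _ (pred1 e)) //.
  apply: (cond_unique HX (c := [:: (e, false)])) => //=.
  + by move: ha; rewrite (inj_eq (@inl_inj _ _)) eqxx => ->.
  + by rewrite eqxx.
- apply: eq_big => [e|e /andP [he ha]].
    by rewrite /tT mem_tT_inl.
  rewrite (@simX _ _ (pred1 e)) //.
  apply: (cond_unique HX (c := [:: (e, true)])) => //=.
  + by move: ha; rewrite (inj_eq (@inl_inj _ _)) eqxx => ->.
  + by rewrite eqxx.
- apply: eq_big => [e|e /andP [he ha]].
    by rewrite /tT mem_tT_inr emb_eq_start.
  rewrite (@simY _ _ (pred1 e)) //.
  apply: (cond_unique HY (c := [:: (e, false)])) => //=.
  + by move: ha; rewrite emb_eq_start eqxx => ->.
  + by rewrite eqxx.
- apply: eq_big => [e|e /andP [he ha]].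
    by rewrite /tT mem_tT_inr emb_eq_start.
  rewrite (@simY _ _ (pred1 e)) //.
  apply: (cond_unique HY (c := [:: (e, true)])) => //=.
  + by move: ha; rewrite emb_eq_start eqxx => ->.
  + by rewrite eqxx.
Qed.

End Mul2.

Section Assemble.
Variable M : adequate_monoid.
Variable Sigma : Type.
Variable chi : Sigma -> M.
Local Notation "a * b" := (amul a b).

Fixpoint rho_pre (Z : tree Sigma) (v : tV Z) (s : seq (tE Z)) : M :=
  match s with
  | [::] => aone M
  | e :: s' => tau_trunk Sigma M chi Z v * (chi (tlab e) * rho_pre (tomega e) s')
  end.

Lemma rho_aux_cat (Z : tree Sigma) (v : tV Z) s1 s2 :
  rho_aux Sigma M chi Z v (s1 ++ s2) =
  rho_pre v s1 * rho_aux Sigma M chi Z (last v (map (@tomega _ Z) s1)) s2.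
Proof.
elim: s1 v => [|e s1 IH] v /=; first by rewrite amul1.
by rewrite IH !amulA.
Qed.

Lemma dwalk_last (Z : tree Sigma) (v : tV Z) es w :
  dwalk Sigma Z v es w -> last v (map (@tomega _ Z) es) = w.
Proof.
elim: es v => [|e es IH] v /=; first by move/eqP.
by case/andP=> _ /IH.
Qed.

Variables X Y : tree Sigma.
Hypothesis HX : is_tree X.
Hypothesis HY : is_tree Y.
Local Notation T := (tmul X Y).
Local Notation emb := (embY Sigma X Y).
Local Notation tX := (trunk Sigma X).
Local Notation tY := (trunk Sigma Y).

Lemma preX d : forall p v, p ++ d = tX -> dwalk Sigma X v d (tend X) ->
  rho_pre (inl v : tV T) (map inl d) = rho_pre v d.
Proof.
elim: d => [|e d IH] p v //= hps /andP [/eqP he hd].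
have hv : v != tend X.
  apply/negP => /eqP hv; rewrite hv in he.
  have : dwalk Sigma X (tend X) (e :: d) (tend X) by rewrite /= he eqxx hd.
  by move/(dwalk_closed HX).
rewrite (vertX chi HX HY hps) //=; last by rewrite he eqxx hd.
by rewrite (IH (rcons p e)) // cat_rcons.
Qed.

Lemma postY d : forall p w, p ++ d = tY -> dwalk Sigma Y (tstart Y) p w -> p != [::] ->
  dwalk Sigma Y w d (tend Y) ->
  rho_aux Sigma M chi T (emb w) (map inr d) = rho_aux Sigma M chi Y w d.
Proof.
elim: d => [|e d IH] p w hps hp hne.
  move=> _ /=; exact: (vertY chi HX HY hps hp hne).
move=> /= /andP [/eqP he hd].
rewrite (vertY chi HX HY hps hp hne).
rewrite (IH (rcons p e)) //.
- by rewrite cat_rcons.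
- rewrite -cats1; apply: (dwalk_catI hp) => /=; by rewrite he !eqxx.
- by case: p {hps hp hne}.
Qed.

Lemma rho_mul : rho chi T = rho chi X * rho chi Y.
Proof.
have hX := trunk_spec HX; have hY := trunk_spec HY.
rewrite /rho (trunk_T HX HY) /tT rho_aux_cat.
have hw : dwalk Sigma T (inl (tstart X)) (map inl tX) (inl (tend X)) by rewrite dwalk_inl.
rewrite (dwalk_last hw) (preX (p := [::])) //.
have -> : rho_aux Sigma M chi X (tstart X) tX =
          rho_pre (tstart X) tX * tau_trunk Sigma M chi X (tend X).
  by rewrite -[tX in LHS]cats0 rho_aux_cat (dwalk_last hX).
rewrite -amulA; congr amul.
case htY : tY hY => [|f d] hY'.
  move: hY' => /= /eqP hse.
  by rewrite /= (junction chi HX HY) hse.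
move: hY' => /= /andP [/eqP hf hd].
rewrite /= (junction chi HX HY) -amulA; congr amul; congr amul; congr amul.
change (tomega (inr f : tE T)) with (emb (tomega f)).
apply: (postY (p := [:: f])) => //=.
by rewrite hf eqxx eqxx.
Qed.

End Assemble.

Theorem proposition5p5 (M : adequate_monoid) (Sigma : Type) (chi : Sigma -> M) :
  (forall X Y : tree Sigma, is_tree X -> is_tree Y ->
     rho chi (tmul X Y) = amul (rho chi X) (rho chi Y)) /\
  (forall X : tree Sigma, is_tree X -> rho chi (tplus X) = aplus (rho chi X)) /\
  (forall X : tree Sigma, is_tree X -> rho chi (tstar X) = astar (rho chi X)) /\
  rho chi (ttriv Sigma) = aone M.
Proof.
split; [|split; [|split]].
- move=> X Y HX HY; exact: rho_mul.
- move=> X HX; exact: rho_plus.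
- move=> X HX; exact: rho_star.
- exact: rho_triv.
Qed.
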